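(* Let $\underline{t}$ and $\underline{u}$ be increment arrays for $n$ agents with $\underline{t}\not\approx\underline{u}$. Then \[\bigcup_{i=1}^{n}\{C(i,\underline{t})\}\;\cap\;\bigcup_{i=1}^{n}\{C(i,\underline{u})\}=\varnothing,\] i.e.\ no coalition is generated both by $\underline{t}$ (from some starting agent) and by $\underline{u}$ (from some starting agent).
   Context: Agent identifiers are $\{1,\ldots,n\}$, arithmetic on identifiers is modulo $n$ with representatives in $\{1,\ldots,n\}$ (a value $0$ is replaced by $n$). An increment array (IA) of size $s$ ($1\le s\le n$) for $n$ agents is a tuple $\underline{t}=\langle t_0,\ldots,t_{s-1}\rangle$ of non-negative integers with $\sum t_i=n-s$. Cumulative increments: $\varphi_1=0$, $\varphi_i=\sum_{k=0}^{i-2}(t_k+1)$ for $2\le i\le s+1$. The coalition generated from $x$ is $C(x,\underline{t})=\{x\}\cup\bigcup_{i=2}^{s}\{(x+\varphi_i)\bmod n\}$ (residues in $\{1,\ldots,n\}$). Two IAs are equivalent, $\underline{t}\approx\underline{u}$, if they have the same size $s$ and $\underline{u}$ is a circular shift of $\underline{t}$: there is $0\le k\le s-1$ with $\langle u_0,\ldots,u_{s-1}\rangle=\langle t_k,\ldots,t_{s-1},t_0,\ldots,t_{k-1}\rangle$. *)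

(* Defs.v *)
From mathcomp Require Import all_boot.
Set Implicit Arguments. Unset Strict Implicit. Unset Printing Implicit Defensive.

(* Agent identifiers are 1..n; residue of x modulo n with representative in {1..n}. *)
Definition resid (n x : nat) : nat := if x %% n == 0 then n else x %% n.

Definition is_IA (n : nat) (t : seq nat) : Prop :=
  0 < size t <= n /\ sumn t = n - size t.

Definition phi (t : seq nat) (i : nat) : nat :=
  \sum_(0 <= k < i.-1) (nth 0 t k).+1.

(* The coalition generated from x: { x } u { (x + phi i) mod n | 2 <= i <= s },
   given as a list of agents (a set via membership). *)
Definition coalition (n x : nat) (t : seq nat) : seq nat :=
  x :: [seq resid n (x + phi t i) | i <- iota 2 (size t).-1].

Definition IA_equiv (t u : seq nat) : Prop :=
  size t = size u /\ exists2 k, k < size t & u = rot k t.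

(* Main.v *)
Require Import Defs.
From mathcomp Require Import all_boot.
From mathcomp Require Import zify.

Definition enc (t : seq nat) : seq bool := flatten [seq true :: nseq a false | a <- t].

Lemma enc_cons a t : enc (a :: t) = (true :: nseq a false) ++ enc t.
Proof. by []. Qed.

Lemma size_enc t : size (enc t) = sumn t + size t.
Proof.
elim: t => [|a t IH] //; rewrite enc_cons size_cat /= size_nseq IH; lia.
Qed.

Lemma enc_cat t u : enc (t ++ u) = enc t ++ enc u.
Proof. by rewrite /enc map_cat flatten_cat. Qed.

Lemma find_enc a t : find id (nseq a false ++ enc t) = a.
Proof.
rewrite find_cat.
have -> : has id (nseq a false) = false by elim: a.
rewrite size_nseq; case: t => [|b t] //=; by rewrite addn0.
Qed.

Lemma enc_inj t u : enc t = enc u -> t = u.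
Proof.
elim: t u => [|a t IH] [|b u] //; rewrite ?enc_cons //.
move=> /= [H].
have ab : a = b by rewrite -(find_enc a t) H find_enc.
subst b; congr (_ :: _); apply: IH.
by move/eqP: H; rewrite eqseq_cat ?size_nseq // => /andP[_ /eqP].
Qed.

Definition posn (t : seq nat) := map (phi t) (iota 1 (size t)).

Lemma phiS a t i : 0 < i -> phi (a :: t) i.+1 = a.+1 + phi t i.
Proof.
case: i => [|i] // _; rewrite /phi /= big_nat_recl //.
Qed.

Lemma posn_cons a t : posn (a :: t) = 0 :: map (addn a.+1) (posn t).
Proof.
rewrite /posn /=.
have -> : phi (a :: t) 1 = 0 by rewrite /phi big_geq.
congr (_ :: _).
rewrite -[2]/(1+1) iotaDl -!map_comp.
apply/eq_in_map => i; rewrite mem_iota => /andP[hi _] /=.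
by rewrite add1n phiS.
Qed.

Lemma nth_enc t d : nth false (enc t) d = (d \in posn t).
Proof.
elim: t d => [|a t IH] d; first by rewrite nth_nil.
rewrite enc_cons posn_cons; case: d => [|d] //=.
rewrite in_cons /= nth_cat size_nseq.
case: ltnP => hd.
  rewrite nth_nseq hd; apply/esym/negbTE/mapP => [[x _ hx]]; lia.
rewrite IH.
have -> : d.+1 = a.+1 + (d - a) by lia.
by rewrite mem_map //; apply: addnI.
Qed.

Lemma nth_rot (s : seq bool) r d : r < size s -> d < size s ->
  nth false (rot r s) d = nth false s ((d + r) %% size s).
Proof.
move=> hr hd; rewrite /rot nth_cat size_drop.
case: ltnP => h.
  rewrite nth_drop modn_small; [congr nth; lia | lia].
rewrite nth_take; last by lia.
have -> : (d + r) = (d - (size s - r)) + size s by lia.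
by rewrite modnDr modn_small; lia.
Qed.

Definition resid_mod n y z : 0 < n -> resid n y = resid n z -> y %% n = z %% n.
Proof.
move=> n0; rewrite /resid.
have := ltn_pmod y n0; have := ltn_pmod z n0.
case: eqP => hy; case: eqP => hz; lia.
Qed.

Lemma resid_eq n y z : y %% n = z %% n -> resid n y = resid n z.
Proof. by rewrite /resid => ->. Qed.

Lemma coalitionE n x t : 1 <= x <= n -> 0 < size t ->
  coalition n x t = map (fun p => resid n (x + p)) (posn t).
Proof.
move=> /andP[x1 xn] st; rewrite /coalition /posn.
case: (size t) st => [|s] //= _.
have -> : phi t 1 = 0 by rewrite /phi big_geq.
rewrite addn0 -map_comp; congr (_ :: _); apply/esym.

rewrite /resid; case: eqP => h.
  case: (ltngtP x n) h => hx; [by rewrite modn_small; lia | lia | by move=> _].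
case: (ltngtP x n) h => hx; [by rewrite modn_small | lia | by rewrite hx modnn].
Qed.

Lemma block t m : nth false (enc t) m = true ->
  exists2 k, k < size t & m = size (enc (take k t)).
Proof.
elim: t m => [|a t IH] m; first by rewrite nth_nil.
rewrite enc_cons; case: m => [|m] /=; first by move=> _; exists 0.
rewrite nth_cat size_nseq; case: ltnP => hm.
  by rewrite nth_nseq hm.
move=> /IH [k hk hmk]; exists k.+1 => //.
rewrite [take _ _]/= enc_cons size_cat /= size_nseq -hmk; lia.
Qed.

Lemma rot_block t k : rot (size (enc (take k t))) (enc t) = enc (rot k t).
Proof.
have -> : enc t = enc (take k t) ++ enc (drop k t) by rewrite -enc_cat cat_take_drop.
by rewrite rot_size_cat /rot enc_cat.
Qed.

Lemma memt n x t d : 0 < n -> size (enc t) = n -> d < n ->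
  (d \in posn t) = (resid n (x + d) \in map (fun p => resid n (x + p)) (posn t)).
Proof.
move=> n0 st dn; apply/idP/idP; first by move=> h; apply: (map_f _ h).
move/mapP => [p hp /(resid_mod _ _ _ n0)].
have pn : p < n.
  rewrite -st; move: hp; rewrite -nth_enc; case: ltnP => // h.
  by rewrite nth_default.
move/eqP; rewrite eqn_modDl !modn_small // => /eqP ->. by [].
Qed.

Theorem lemma5 (n : nat) (t u : seq nat) :
  is_IA n t -> is_IA n u -> ~ IA_equiv t u ->
  forall i j : nat, 1 <= i <= n -> 1 <= j <= n ->
    ~ (coalition n i t =i coalition n j u).
Proof.
move=> [/andP[st sn] sumt] [/andP[su sn'] sumu] neq i j hi hj heq.
have n0 : 0 < n by lia.
have sizet : size (enc t) = n by rewrite size_enc; lia.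
have sizeu : size (enc u) = n by rewrite size_enc; lia.
have key : forall d, d < n -> (d \in posn t) = (((d + (i + n - j)) %% n) \in posn u).
  move=> d dn.
  rewrite (memt _ i _ _ n0 sizet dn) -(coalitionE _ _ _ hi st) heq (coalitionE _ _ _ hj su).
  rewrite (memt _ j _ ((d + (i + n - j)) %% n) n0 sizeu) ?ltn_pmod //.
  rewrite (resid_eq n (j + (d + (i + n - j)) %% n) (i + d)) //.
  rewrite modnDmr.
  have -> : j + (d + (i + n - j)) = (i + d) + n by lia.
  by rewrite modnDr.
set r := (i + n - j) %% n.
have rn : r < n by rewrite ltn_pmod.
have E : enc t = rot r (enc u).
  apply: (@eq_from_nth _ false); first by rewrite size_rot sizet sizeu.
  move=> d; rewrite sizet => dn.
  by rewrite nth_rot sizeu // nth_enc nth_enc key // modnDmr.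
have [r0|rpos] := posnP r.
  have tu : t = u by apply: enc_inj; rewrite E r0 rot0.
  by apply: neq; split; [rewrite tu | exists 0; rewrite // rot0].
have E2 : enc u = rot (n - r) (enc t).
  rewrite E /rotr.
  have := rotK r (enc u); rewrite /rotr size_rot sizeu => ->. by [].
have : nth false (enc t) (n - r) = true.
  have h0 : nth false (enc u) 0 = true by move: su; case: (u).
  rewrite E2 nth_rot ?sizet in h0; [|lia|lia].
  by rewrite add0n modn_small in h0; lia.
move=> /block [k hk hm].
apply: neq; split; first by rewrite -(size_rot k t); congr size; apply: enc_inj; rewrite -rot_block -hm -E2.
exists k => //; apply: enc_inj; by rewrite -rot_block -hm -E2.
Qed.
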